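(* Let $\boldsymbol\mu>\mathbf 0$ and assume $\mathbf I-\mathbf G$ is irreducible for every $\mathbf G\in\mathcal G(\boldsymbol\mu)$. Define $\beta^*(\boldsymbol\mu)=1/\max_{\mathbf G\in\mathcal G(\boldsymbol\mu)}\lambda(\mathbf I-\mathbf G)$. Then for $\beta>0$, there exists $\mathbf p\geq\mathbf 0$ with $\mathbf A(\beta\boldsymbol\mu)\mathbf p\geq\mathbf n(\beta\boldsymbol\mu)$ if and only if $\beta<\beta^*(\boldsymbol\mu)$; in particular $\sup\{\beta>0:\exists\,\mathbf p\geq\mathbf 0,\ \mathbf A(\beta\boldsymbol\mu)\mathbf p\geq\mathbf n(\beta\boldsymbol\mu)\}=\beta^*(\boldsymbol\mu)$.
   Context: Multicast system: $N$ transmitters; transmitter $T_i$ has $K_i\geq1$ receivers $R_i^{k}$, $k\in\mathcal K_i=\{1,\dots,K_i\}$. Channel gains $g_{r_i^{k},t_j}\geq 0$ (from $T_j$ to $R_i^k$) with $g_{r_i^{k},t_i}>0$; noise variance $\sigma^2>0$. For $\boldsymbol\mu\in\mathbb R^N$, $\mathbf a_i^{k}(\boldsymbol\mu)\in\mathbb R^{1\times N}$ is the row vector with $i$-th entry $1$ and $j$-th entry $-\mu_i g_{r_i^{k},t_j}/g_{r_i^{k},t_i}$ for $j\neq i$; $n_i^{k}(\boldsymbol\mu)=\mu_i\sigma^2/g_{r_i^{k},t_i}$. $\mathbf A(\boldsymbol\mu)$ stacks all rows $\mathbf a_i^{k}(\boldsymbol\mu)$, $\mathbf n(\boldsymbol\mu)$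 stacks the corresponding $n_i^k(\boldsymbol\mu)$. $\mathcal G(\boldsymbol\mu)$ is the set of $N\times N$ matrices whose $i$-th row is $\mathbf a_i^{k_i}(\boldsymbol\mu)$ for a choice $k_i\in\mathcal K_i$. $\lambda(\cdot)$ is the Perron–Frobenius eigenvalue (spectral radius). *)

(* Defs.v *)
(* Scalars live in a numeric closed field C (e.g. the complex
   numbers); all data (gains, noise, mu, beta, p) are required to be >= 0 or > 0,
   hence real.  Complex scalars are needed only to speak about eigenvalues. *)
From HB Require Import structures.
From mathcomp Require Import all_boot all_order all_algebra.
Set Implicit Arguments. Unset Strict Implicit. Unset Printing Implicit Defensive.
Import Order.TTheory GRing.Theory Num.Theory.
Local Open Scope ring_scope.

Section Defs.
Variable C : numClosedFieldType.
Variable N : nat.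
Variable K : 'I_N -> nat.
(* g i k j = g_{r_i^k, t_j}, the gain from T_j to receiver R_i^k *)
Variable g : forall i : 'I_N, 'I_(K i) -> 'I_N -> C.

Definition arow (mu : 'I_N -> C) (i : 'I_N) (k : 'I_(K i)) (j : 'I_N) : C :=
  if j == i then 1 else - (mu i * g k j / g k i).

Definition nvec (sigma2 : C) (mu : 'I_N -> C) (i : 'I_N) (k : 'I_(K i)) : C :=
  mu i * sigma2 / g k i.

(* A(mu) p >= n(mu), written row by row (one row per receiver R_i^k) *)
Definition feasible (sigma2 : C) (mu : 'I_N -> C) (p : 'I_N -> C) : Prop :=
  forall (i : 'I_N) (k : 'I_(K i)),
    nvec sigma2 mu k <= \sum_(j < N) arow mu k j * p j.

Definition choice_t := {dffun forall i : 'I_N, 'I_(K i)}.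

(* the element of G(mu) determined by a choice c *)
Definition Gmat (mu : 'I_N -> C) (c : choice_t) : 'M[C]_N :=
  \matrix_(i < N, j < N) arow mu (c i) j.
End Defs.

(* irreducibility of a nonnegative square matrix (Horn--Johnson): its
   directed graph is strongly connected, i.e. for all i j some positive power
   has a positive (i,j) entry. *)
Definition irreducible_mx (C : numDomainType) (n : nat) (M : 'M[C]_n) : Prop :=
  forall i j : 'I_n, exists k : nat, (0 < k)%N /\ 0 < (M ^+ k) i j.

Definition maxr (C : numDomainType) (x y : C) : C := if x <= y then y else x.

Definition specrad (C : numClosedFieldType) (n : nat) (M : 'M[C]_n) : C :=
  \big[@maxr C/0]_(z <- sval (closed_field_poly_normal (char_poly M))) `|z|.

Definition beta_star (C : numClosedFieldType) (N : nat) (K : 'I_N -> nat)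
  (g : forall i : 'I_N, 'I_(K i) -> 'I_N -> C) (mu : 'I_N -> C) : C :=
  1 / \big[@maxr C/0]_(c : choice_t K) specrad (1%:M - Gmat g mu c).

Definition is_sup (C : numDomainType) (S : C -> Prop) (s : C) : Prop :=
  (forall b, S b -> b <= s) /\ (forall u, (forall b, S b -> b <= u) -> s <= u).

(* Main.v *)
Require Import Defs.
From HB Require Import structures.
From mathcomp Require Import all_boot all_order all_algebra.
Set Implicit Arguments. Unset Strict Implicit. Unset Printing Implicit Defensive.
Import Order.TTheory GRing.Theory Num.Theory.
Local Open Scope ring_scope.

Section IVT.
Variable C : numClosedFieldType.
Implicit Types (p q : {poly C}) (a b x y z : C).

Lemma real_addr a b : a \is Num.real -> a < b -> b \is Num.real.
Proof.
move=> ha hab; have -> : b = a + (b - a) by rewrite addrC subrK.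
by rewrite rpredD // gtr0_real // subr_gt0.
Qed.

Lemma horner_normal p x (rs : seq C) :
  p = lead_coef p *: \prod_(z <- rs) ('X - z%:P) ->
  p.[x] = lead_coef p * \prod_(z <- rs) (x - z).
Proof.
move=> hp; rewrite {1}hp hornerZ horner_prod; congr (_ * _).
by apply: eq_bigr => z _; rewrite hornerXsubC.
Qed.

Lemma ivt n p a b : (size p <= n)%N -> map_poly Num.conj p = p ->
  a \is Num.real -> a < b -> p.[a] * p.[b] < 0 ->
  exists2 r, a < r < b & root p r.
Proof.
elim: n p => [|n IH] p.
  rewrite leqn0 size_poly_eq0 => /eqP -> _ _ _; by rewrite !horner0 mul0r ltxx.
move=> hsz hc ha hab hlt.
have hb := real_addr ha hab.
have [rs hp] := closed_field_poly_normal p.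
have [/hasP [z zin /andP [h1 h2]] | hnhas] := boolP (has (fun z => (a < z) && (z < b)) rs).
  exists z; first by rewrite h1 h2.
  by rewrite hp /root hornerZ mulf_eq0 -/(root _ z) root_prod_XsubC zin orbT.
have hlcr : lead_coef p \is Num.real.
  apply/CrealP; rewrite -[in RHS]hc lead_coef_map //.
have [hall | ] := boolP (all (fun z => z \is Num.real) rs).
  exfalso; move: hlt; rewrite (horner_normal a hp) (horner_normal b hp).
  rewrite mulrACA -big_split /= => H.
  suff H0 : 0 <= lead_coef p * lead_coef p * \prod_(i <- rs) ((a - i) * (b - i)).
    by have := lt_le_trans H H0; rewrite ltxx.
  apply: mulr_ge0; first by rewrite -expr2 real_exprn_even_ge0.
  rewrite big_seq; apply: prodr_ge0 => z zin.
  have zr : z \is Num.real by move/allP: hall => /(_ z zin).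
  have hz : ~~ ((a < z) && (z < b)) by move/hasPn: hnhas => /(_ z zin).
  have [zla | alz] := boolP (z <= a).
    apply: mulr_ge0; first by rewrite subr_ge0.
    by rewrite subr_ge0 (le_trans zla) // ltW.
  have alz' : a < z by rewrite real_ltNge.
  rewrite alz' /= in hz.
  have blz : b <= z by rewrite real_leNgt.
  apply: mulr_le0; first by rewrite subr_le0 ltW.
  by rewrite subr_le0.
case/allPn => z zin znr.
have pn0 : p != 0 by apply: contraTneq hlt => ->; rewrite !horner0 mul0r ltxx.
have rz : root p z.
  by rewrite hp /root hornerZ mulf_eq0 -/(root _ z) root_prod_XsubC zin orbT.
set w := z^*.
have rw : root p w.
  by rewrite /root /w -{1}hc horner_map /= (eqP rz) rmorph0.
have wz : w != z by rewrite /w -CrealE.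
have [q1 hq1] := factor_theorem _ _ rz.
have rq1 : root q1 w.
  move: rw; rewrite hq1 rootM => /orP [//|].
  by rewrite root_XsubC (negPf wz).
have [q hq] := factor_theorem _ _ rq1.
set d := ('X - w%:P) * ('X - z%:P).
have hpq : p = q * d by rewrite hq1 hq /d mulrA.
have dn0 : d != 0 by rewrite mulf_neq0 // polyXsubC_eq0.
have qn0 : q != 0 by apply: contraNneq pn0 => q0; rewrite hpq q0 mul0r.
have hqc : map_poly Num.conj q = q.
  have hd : map_poly Num.conj d = d.
    by rewrite /d rmorphM /= !map_polyXsubC /= /w conjCK mulrC.
  by apply: (mulIf dn0); rewrite -{1}hd -rmorphM /= -hpq hc.
have hsq : (size q <= n)%N.
  move: hsz; rewrite hpq size_mul // /d size_mul ?polyXsubC_eq0 //.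
  rewrite !size_XsubC /=.
  have e : ((size q + (0 + 1%R + 2%R)).-1 = (size q).+2)%N by rewrite !addnS addn0.
  by rewrite e ltnS => /ltnW.
have dpos x : x \is Num.real -> 0 < d.[x].
  move=> xr; rewrite /d hornerM !hornerXsubC.
  have -> : x - w = (x - z)^* by rewrite rmorphB /= (conj_Creal xr).
  rewrite mulrC mul_conjC_gt0 subr_eq0.
  by apply: contraNneq znr => <-.
have [r hr rq] : exists2 r, a < r < b & root q r.
  apply: IH => //.
  move: hlt; rewrite hpq (hornerM q d a) (hornerM q d b) mulrACA pmulr_llt0 //.
  by apply: mulr_gt0; apply: dpos.
by exists r => //; rewrite hpq rootM rq.
Qed.

End IVT.

Section Gen.
Variable C : numClosedFieldType.

Lemma seq_max (s : seq C) x0 : all (fun x => x \is Num.real) (x0 :: s) ->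
  exists2 m, m \in x0 :: s & forall y, y \in x0 :: s -> y <= m.
Proof.
elim: s x0 => [|y s IH] x0.
  by move=> _; exists x0 => [|z]; rewrite ?inE // => /eqP ->.
move=> /= /andP [hx0 hall].
have hall' : all (fun x => x \is Num.real) (y :: s) := hall.
have [m min hm] := IH y hall'.
have mr : m \is Num.real := allP hall' m min.
have [xm | mx] := boolP (x0 <= m).
  exists m; first by rewrite inE min orbT.
  by move=> z; rewrite inE => /orP [/eqP -> // | /hm].
have mx' : m < x0 by rewrite real_ltNge.
exists x0; first by rewrite inE eqxx.
move=> z; rewrite inE => /orP [/eqP -> // | /hm zm].
exact: le_trans zm (ltW mx').
Qed.

Lemma fin_max (I : finType) (i0 : I) (r : I -> C) :
  (forall i, r i \is Num.real) -> exists m, forall i, r i <= r m.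
Proof.
move=> hr.
have hall : all (fun x => x \is Num.real) (r i0 :: map r (enum I)).
  apply/allP => x; rewrite inE => /orP [/eqP -> | /mapP [i _ ->]]; exact: hr.
have [m min hm] := seq_max hall.
move: min hm; rewrite inE => /orP [/eqP -> | /mapP [i _ ->]] hm.
  by exists i0 => i; apply: hm; rewrite inE map_f ?mem_enum ?orbT.
by exists i => j; apply: hm; rewrite inE map_f ?mem_enum ?orbT.
Qed.

Lemma fin_min (I : finType) (i0 : I) (r : I -> C) :
  (forall i, r i \is Num.real) -> exists m, forall i, r m <= r i.
Proof.
move=> hr; have [m hm] := @fin_max I i0 (fun i => - r i) (fun i => ltac:(by rewrite rpredN)).
by exists m => i; rewrite -lerN2 hm.
Qed.

Lemma realpoly (p : {poly C}) x : map_poly Num.conj p = p -> x \is Num.real ->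
  p.[x] \is Num.real.
Proof.
move=> hp hx; apply/CrealP; rewrite -horner_map /= hp.
by rewrite (conj_Creal hx).
Qed.

Lemma ge1_real (x : C) : 1 <= x -> x \is Num.real.
Proof.
move=> h; have -> : x = 1 + (x - 1) by rewrite addrC subrK.
by rewrite rpredD ?real1 // ger0_real // subr_ge0.
Qed.

End Gen.

Section Mx.
Variable C : numClosedFieldType.
Variable n : nat.
Variable M : 'M[C]_n.
Hypothesis hM0 : forall i j, 0 <= M i j.

Lemma eval_cpmx (t : C) : map_mx (horner_eval t) (char_poly_mx M) = t%:M - M.
Proof.
apply/matrixP => i j; rewrite !mxE /= horner_evalE.
by rewrite hornerD hornerN hornerMn hornerX hornerC.
Qed.

Lemma cp_eval t : (char_poly M).[t] = \det (t%:M - M).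
Proof. by rewrite /char_poly -horner_evalE -det_map_mx eval_cpmx. Qed.

Lemma adj_eval t k j : ((\adj (char_poly_mx M)) k j).[t] = \adj (t%:M - M) k j.
Proof.
by rewrite -eval_cpmx -map_mx_adj [RHS]mxE.
Qed.

Lemma Mconj : map_mx Num.conj M = M.
Proof. by apply/matrixP => i j; rewrite mxE geC0_conj. Qed.

Lemma cp_conj : map_poly Num.conj (char_poly M) = char_poly M.
Proof. by rewrite map_char_poly Mconj. Qed.

Lemma adj_conj k j : map_poly Num.conj ((\adj (char_poly_mx M)) k j) = (\adj (char_poly_mx M)) k j.
Proof.
have h := map_mx_adj (map_poly Num.conj) (char_poly_mx M).
rewrite map_char_poly_mx Mconj in h.
by have := congr1 (fun A : 'M_n => A k j) h; rewrite mxE.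
Qed.


Lemma posZ (t : C) j (x : 'I_n -> C) : irreducible_mx M -> 0 < t ->
  (forall k, 0 <= x k) ->
  (forall k, t * x k = (k == j)%:R + \sum_l M k l * x l) -> forall k, 0 < x k.
Proof.
move=> irr ht hx heq k; rewrite lt_def hx andbT; apply/negP => /negPn xk0.
have hsum a : 0 <= \sum_l M a l * x l by apply: sumr_ge0 => l _; rewrite mulr_ge0.
have hj : x j != 0.
  apply/negP => /eqP xj; move: (heq j); rewrite xj mulr0 eqxx => /esym/eqP.
  by rewrite paddr_eq0 // ?oner_eq0 ?ler01.
have hZ a b : x a == 0 -> x b != 0 -> M a b = 0.
  move=> /eqP xa xb; have aj : (a == j) = false.
    by apply/negP => /eqP aj; move: hj; rewrite -aj xa eqxx.
  move: (heq a); rewrite xa mulr0 aj add0r => /esym/eqP.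
  rewrite psumr_eq0 => [/allP H|l _]; last by rewrite mulr_ge0.
  have := H b (mem_index_enum b); rewrite mulf_eq0 (negPf xb) orbF.
  by move/eqP.
have hP m : forall a b, x a == 0 -> x b != 0 -> (M ^+ m.+1) a b = 0.
  elim: m => [|m IH] a b xa xb; first by rewrite expr1 hZ.
  rewrite exprS -mulmxE mxE big1 // => l _.
  have [xl | xl] := boolP (x l == 0); first by rewrite IH // mulr0.
  by rewrite hZ // mul0r.
have [[|m] [hm hpos]] := irr k j; first by [].
by move: hpos; rewrite hP ?(negPn xk0) // ltxx.
Qed.

Lemma domZ (T : C) j (x : 'I_n -> C) : \sum_k \sum_l M k l < T ->
  (forall k, x k \is Num.real) ->
  (forall k, T * x k = (k == j)%:R + \sum_l M k l * x l) -> forall k, 0 <= x k.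
Proof.
move=> hT hr heq k0.
have [m hm] := fin_min k0 hr.
suff : 0 <= x m by move/le_trans; apply.
rewrite real_leNgt ?real0 //; apply/negP => xm.
set S := \sum_k \sum_l M k l.
have S0 : 0 <= S by apply: sumr_ge0 => k _; apply: sumr_ge0.
have RS : \sum_l M m l <= S.
  rewrite /S [X in _ <= X](bigD1 m) //= lerDl.
  by apply: sumr_ge0 => k _; apply: sumr_ge0 => l _; exact: hM0.
have h1 : x m * \sum_l M m l <= T * x m.
  rewrite heq mulr_sumr; apply: ler_wpDl; first by rewrite ler0n.
  by apply: ler_sum => l _; rewrite mulrC; apply: ler_wpM2l; [exact: hM0 | exact: hm].
have h2 := ler_wnM2l (ltW xm) RS.
have h3 : x m * T < x m * S by rewrite (ltr_nM2l xm).
have := lt_le_trans h3 (le_trans h2 h1); by rewrite mulrC ltxx.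
Qed.

End Mx.

Section LN.
Variable C : numClosedFieldType.
Variable n : nat.
Variable M : 'M[C]_n.
Hypothesis hM0 : forall i j, 0 <= M i j.
Hypothesis hirr : irreducible_mx M.
Hypothesis hroot : forall u : C, 1 <= u -> (char_poly M).[u] != 0.

Lemma real_sqr_gt0 (x : C) : x \is Num.real -> x != 0 -> 0 < x ^+ 2.
Proof. by move=> xr xn0; rewrite expr2 -{2}(conj_Creal xr) mul_conjC_gt0. Qed.

Lemma lemN k j : 0 < \adj (1%:M - M) k j / \det (1%:M - M).
Proof.
pose A t := t%:M - M.
pose X t l := \adj (A t) l j / \det (A t).
have detn0 t : 1 <= t -> \det (A t) != 0 by rewrite /A -cp_eval; apply: hroot.
have detr t : t \is Num.real -> \det (A t) \is Num.real.
  by move=> tr; rewrite /A -cp_eval realpoly // cp_conj.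
have adjr t l : t \is Num.real -> \adj (A t) l j \is Num.real.
  by move=> tr; rewrite /A -adj_eval realpoly // adj_conj.
have Xr t l : 1 <= t -> X t l \is Num.real.
  by move=> t1; rewrite /X rpredM ?rpredV ?adjr ?detr // ge1_real.
have heqX t : 1 <= t -> forall l, t * X t l = (l == j)%:R + \sum_q M l q * X t q.
  move=> t1 l.
  have e : t * \adj (A t) l j = \det (A t) * (l == j)%:R + \sum_q M l q * \adj (A t) q j.
    have := congr1 (fun B : 'M_n => B l j) (mul_mx_adj (A t)).
    rewrite {1}/A mulmxBl mul_scalar_mx !mxE => /eqP; rewrite subr_eq => /eqP ->.
    by rewrite mulr_natr.
  rewrite /X mulrA e mulrDl mulrC mulKf ?detn0 // mulr_suml; congr (_ + _).
  by apply: eq_bigr => q _; rewrite mulrA.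
pose fp l := (\adj (char_poly_mx M)) l j * char_poly M.
have fp_eval t l : (fp l).[t] = \adj (A t) l j * \det (A t).
  by rewrite /fp hornerM adj_eval cp_eval.
have fp_conj l : map_poly Num.conj (fp l) = fp l.
  by rewrite /fp rmorphM /= (adj_conj hM0) (cp_conj hM0).
have Xfp t l : 1 <= t -> X t l = (fp l).[t] / (\det (A t)) ^+ 2.
  by move=> t1; rewrite fp_eval /X expr2 invfM mulrA mulfK ?detn0.
have d2 t : 1 <= t -> 0 < (\det (A t)) ^+ 2.
  by move=> t1; rewrite real_sqr_gt0 ?detr ?detn0 // ge1_real.
have sgp t l : 1 <= t -> (0 < X t l) = (0 < (fp l).[t]).
  by move=> t1; rewrite Xfp // pmulr_lgt0 // invr_gt0 d2.
have sgn t l : 1 <= t -> (X t l < 0) = ((fp l).[t] < 0).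
  by move=> t1; rewrite Xfp // pmulr_llt0 // invr_gt0 d2.
have sg0 t l : 1 <= t -> (X t l == 0) = ((fp l).[t] == 0).
  by move=> t1; rewrite Xfp // mulf_eq0 invr_eq0 (gt_eqF (d2 t t1)) orbF.
set S := \sum_k \sum_l M k l.
have S0 : 0 <= S by apply: sumr_ge0 => k' _; apply: sumr_ge0 => l _; exact: hM0.
set T0 := 1 + S.
have T01 : 1 <= T0 by rewrite lerDl.
have ST0 : S < T0 by rewrite ltrDr ltr01.
have xT0 l : 0 < X T0 l.
  apply: (posZ hM0 (t := T0)) => //; first exact: lt_le_trans ltr01 T01.
    by apply: (domZ hM0 ST0) => [q|q]; [apply: Xr | apply: heqX].
  exact: heqX.
have claim : forall l, 0 <= X 1 l.
  move=> i; rewrite real_leNgt ?Xr ?real0 //; apply/negP => hneg.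
  have fpos l : 0 < (fp l).[T0] by rewrite -sgp.
  have fn0 l : fp l != 0 by apply: contraTneq (fpos l) => ->; rewrite horner0 ltxx.
  have [eT | neT] := eqVneq 1 T0.
    by move: (xT0 i); rewrite -eT => /(lt_trans hneg); rewrite ltxx.
  have hT1 : 1 < T0 by rewrite lt_def eq_sym neT T01.
  pose rs l := sval (closed_field_poly_normal (fp l)).
  have hps l : fp l = lead_coef (fp l) *: \prod_(z <- rs l) ('X - z%:P).
    exact: (svalP (closed_field_poly_normal (fp l))).
  have memroot l r : root (fp l) r -> r \in rs l.
    rewrite {1}hps /root hornerZ mulf_eq0 lead_coef_eq0 (negPf (fn0 l)) /=.
    by rewrite -/(root _ r) root_prod_XsubC.
  have rootmem l r : r \in rs l -> root (fp l) r.
    by move=> h; rewrite hps /root hornerZ mulf_eq0 -/(root _ r) root_prod_XsubC h orbT.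
  pose L := [seq r <- flatten [seq rs l | l <- enum 'I_n] | (1 <= r) && (r <= T0)].
  have inL l r : root (fp l) r -> 1 <= r -> r <= T0 -> r \in L.
    move=> hr h1 h2; rewrite mem_filter h1 h2 /=.
    by apply/flatten_mapP; exists l; rewrite ?mem_enum // memroot.
  have fromL r : r \in L -> [/\ 1 <= r, r <= T0 & exists l, root (fp l) r].
    rewrite mem_filter => /andP [/andP [h1 h2] /flatten_mapP [l _ hl]].
    by split => //; exists l; apply: rootmem.
  have [r1 /andP [r1a r1b] r1r] : exists2 r, 1 < r < T0 & root (fp i) r.
    apply: (@ivt _ (size (fp i)) (fp i) 1 T0) => //.
    by rewrite pmulr_llt0 // -sgn.
  have r1L : r1 \in L by apply: (inL i) => //; [exact: ltW | exact: ltW].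
  have hallr : all (fun x => x \is Num.real) (r1 :: L).
    apply/allP => x; rewrite inE => /orP [/eqP -> | /fromL [h1 _ _]]; apply: ge1_real => //.
    exact: ltW.
  have [tau tauin htau] := seq_max hallr.
  have tauL : tau \in L by move: tauin; rewrite inE => /orP [/eqP -> |].
  have [tau1 tauT [l0 rl0]] := fromL tau tauL.
  have claim2 l : 0 <= X tau l.
    rewrite real_leNgt ?Xr ?real0 //; apply/negP; rewrite sgn // => hl.
    have [eT | neT'] := eqVneq tau T0.
      by move: (fpos l); rewrite -eT => /(lt_trans hl); rewrite ltxx.
    have htT : tau < T0 by rewrite lt_def eq_sym neT' tauT.
    have [r2 /andP [r2a r2b] r2r] : exists2 r, tau < r < T0 & root (fp l) r.
      apply: (@ivt _ (size (fp l))) => //; first exact: ge1_real.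
      by rewrite pmulr_llt0.
    have r2L : r2 \in L.
      apply: (inL l) => //; [exact: le_trans tau1 (ltW r2a) | exact: ltW].
    have := htau r2; rewrite inE r2L orbT => /(_ isT) /(lt_le_trans r2a).
    by rewrite ltxx.
  have := posZ hM0 hirr (lt_le_trans ltr01 tau1) claim2 (heqX tau tau1) l0.
  by rewrite lt_def sg0 // (eqP rl0) eqxx.
have := posZ hM0 hirr ltr01 claim (heqX 1 (lexx 1)) k.
by rewrite /X /A.
Qed.

End LN.

Section EE.
Variable C : numClosedFieldType.

Lemma char_poly_tr n (F : 'M[C]_n) : char_poly F^T = char_poly F.
Proof. by rewrite /char_poly -det_tr; congr (\det _); apply/matrixP => i j; rewrite !mxE eq_sym. Qed.

Lemma eig_bound n (F : 'M[C]_n) (beta : C) (p : 'I_n -> C) :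
  (forall i j, 0 <= F i j) -> 0 < beta -> (forall i, 0 < p i) ->
  (forall i, beta * \sum_j F i j * p j < p i) ->
  forall z, root (char_poly F) z -> beta * `|z| < 1.
Proof.
move=> hF hb hp hlt z; rewrite -char_poly_tr -eigenvalue_root_char.
move=> /eigenvalueP [v hv vn0].
pose x i := v 0 i.
have hx i : \sum_j F i j * x j = z * x i.
  have := congr1 (fun B : 'rV_n => B 0 i) hv; rewrite !mxE => <-.
  by apply: eq_bigr => j _; rewrite mxE mulrC.
have [i0 hi0] : exists i, x i != 0.
  apply/existsP; apply: contraNT vn0; rewrite negb_exists => /forallP H.
  by apply/eqP/matrixP => a b; rewrite ord1 mxE; apply/eqP; move: (H b); rewrite negbK.
have [m hm] := @fin_max _ _ i0 (fun i => `|x i| / p i) (fun i => ltac:(by rewrite rpredM ?rpredV ?normr_real // gtr0_real)).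
set t := `|x m| / p m in hm.
have tpos : 0 < t.
  apply: lt_le_trans (hm i0); by rewrite divr_gt0 ?normr_gt0.
have hxj j : `|x j| <= t * p j by rewrite -ler_pdivrMr ?hm.
have hxm : `|x m| = t * p m by rewrite /t mulfVK // gt_eqF.
have h1 : `|z| * `|x m| <= t * \sum_j F m j * p j.
  rewrite -normrM -hx mulr_sumr; apply: le_trans (ler_norm_sum _ _ _) _.
  apply: ler_sum => j _; rewrite normrM (ger0_norm (hF m j)) mulrCA.
  by apply: ler_wpM2l => //; rewrite mulrC.
have h2 : beta * (`|z| * `|x m|) < t * p m.
  apply: le_lt_trans (ler_wpM2l (ltW hb) h1) _.
  by rewrite mulrCA ltr_pM2l.
rewrite hxm mulrA mulrA -[X in _ < X]mul1r in h2.
by rewrite -(ltr_pM2r (mulr_gt0 tpos (hp m))) mulrA.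
Qed.


Section MaxR.
Variables (I : Type) (r : seq I) (F : I -> C).
Hypothesis hF : forall i, F i \is Num.real.

Lemma mx_real (x y : C) : x \is Num.real -> y \is Num.real -> Defs.maxr x y \is Num.real.
Proof. by move=> xr yr; rewrite /Defs.maxr; case: ifP. Qed.

Lemma mx_l (x y : C) : x \is Num.real -> y \is Num.real -> x <= Defs.maxr x y.
Proof. by move=> xr yr; rewrite /Defs.maxr; case: ifP => // /negbT; rewrite real_leNgt // negbK => /ltW. Qed.

Lemma mx_r (x y : C) : x \is Num.real -> y \is Num.real -> y <= Defs.maxr x y.
Proof.
move=> xr yr; rewrite /Defs.maxr; case: ifP => [_|/negbT]; first exact: lexx.
by rewrite real_leNgt // negbK => /ltW.
Qed.

Lemma bmx_real_gen s : \big[@Defs.maxr C/0]_(i <- s) F i \is Num.real.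
Proof.
elim: s => [|a s IH]; first by rewrite big_nil real0.
by rewrite big_cons; apply: mx_real.
Qed.

Lemma bmx_real : \big[@Defs.maxr C/0]_(i <- r) F i \is Num.real.
Proof.
elim: r => [|a s IH]; first by rewrite big_nil real0.
by rewrite big_cons; apply: mx_real.
Qed.

Lemma bmx_ge0 : 0 <= \big[@Defs.maxr C/0]_(i <- r) F i.
Proof.
elim: r => [|a s IH]; first by rewrite big_nil.
by rewrite big_cons; apply: le_trans IH (mx_r (hF a) (bmx_real_gen s)).
Qed.


Lemma bmx_lt B : 0 < B -> (forall i, F i < B) -> \big[@Defs.maxr C/0]_(i <- r) F i < B.
Proof.
move=> hB hlt; elim: r => [|a s IH]; first by rewrite big_nil.
by rewrite big_cons /Defs.maxr; case: ifP.
Qed.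

End MaxR.

Lemma bmx_ge (I : eqType) (r : seq I) (F : I -> C) :
  (forall i, F i \is Num.real) ->
  forall i, i \in r -> F i <= \big[@Defs.maxr C/0]_(i <- r) F i.
Proof.
move=> hF i; elim: r => [|a s IH] //; rewrite inE big_cons => /orP [/eqP -> | /IH h].
  by apply: mx_l => //; apply: bmx_real.
by apply: le_trans h (mx_r _ _) => //; apply: bmx_real.
Qed.


Lemma bmx_lt_in (I : eqType) (r : seq I) (F : I -> C) B : 0 < B ->
  (forall i, i \in r -> F i < B) -> \big[@Defs.maxr C/0]_(i <- r) F i < B.
Proof.
move=> hB; elim: r => [|a s IH] hlt; first by rewrite big_nil.
rewrite big_cons /Defs.maxr; case: ifP => _.
  by apply: IH => i hi; apply: hlt; rewrite inE hi orbT.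
by apply: hlt; rewrite inE eqxx.
Qed.

End EE.

Section FF.
Variable C : numClosedFieldType.

Lemma mx_pow_ge0 n (A : 'M[C]_n) : (forall i j, 0 <= A i j) ->
  forall m i j, 0 <= (A ^+ m) i j.
Proof.
move=> hA; elim=> [|m IH] i j; first by rewrite expr0 mxE ler0n.
rewrite exprS -mulmxE mxE; apply: sumr_ge0 => l _; exact: mulr_ge0.
Qed.

Lemma diag_pow n (A : 'M[C]_n) : (forall i j, 0 <= A i j) ->
  forall m i, (A i i) ^+ m <= (A ^+ m) i i.
Proof.
move=> hA; elim=> [|m IH] i; first by rewrite !expr0 mxE eqxx.
rewrite exprS [A ^+ m.+1]exprS -mulmxE mxE (bigD1 i) //=.
apply: ler_wpDr; first by apply: sumr_ge0 => l _; rewrite mulr_ge0 ?mx_pow_ge0.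
exact: ler_wpM2l.
Qed.

Lemma prod_zero (rs : seq C) : all (fun z => z == 0) rs ->
  \prod_(z <- rs) ('X - z%:P) = 'X ^+ size rs.
Proof.
elim: rs => [|a s IH] /=; first by rewrite big_nil.
by case/andP => /eqP -> h; rewrite big_cons IH // subr0 exprS.
Qed.

Lemma specrad_pos n (F : 'M[C]_n.+1) : (forall i j, 0 <= F i j) ->
  irreducible_mx F -> 0 < specrad F.
Proof.
move=> hF irr; rewrite /specrad.
set rs := sval _.
have hp : char_poly F = lead_coef (char_poly F) *: \prod_(z <- rs) ('X - z%:P).
  exact: (svalP (closed_field_poly_normal (char_poly F))).
have [/hasP [z zin zn0] | hn] := boolP (has (fun z => z != 0) rs).
  apply: lt_le_trans (bmx_ge (fun z => normr_real z) zin).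
  by rewrite normr_gt0.
exfalso.
have hall : all (fun z => z == 0) rs.
  by apply/allP => z zin; move/hasPn: hn => /(_ z zin); rewrite negbK.
have hz : F ^+ size rs = 0.
  have := Cayley_Hamilton F; rewrite hp (monicP (char_poly_monic F)) scale1r.
  by rewrite prod_zero // rmorphXn /= horner_mx_X.
have [k [k0 hk]] := irr ord0 ord0.
have h1 := diag_pow (mx_pow_ge0 hF k) (size rs) ord0.
rewrite -exprM mulnC exprM hz expr0n in h1.
move: h1; case: k k0 hk => [|k] // _ hk; rewrite /= mxE /= => h1.
have := lt_le_trans (exprn_gt0 (size rs) hk) h1; by rewrite ltxx.
Qed.

End FF.

Section Main.
Variable C : numClosedFieldType.
Variable N : nat.
Variable K : 'I_N -> nat.
Variable g : forall i : 'I_N, 'I_(K i) -> 'I_N -> C.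
Variable sigma2 : C.
Variable mu : 'I_N -> C.
Hypothesis hK : forall i, (0 < K i)%N.
Hypothesis hg : forall i (k : 'I_(K i)) j, 0 <= g k j.
Hypothesis hgi : forall i (k : 'I_(K i)), 0 < g k i.
Hypothesis hs : 0 < sigma2.
Hypothesis hmu : forall i, 0 < mu i.

Definition fr i (k : 'I_(K i)) j : C := if j == i then 0 else mu i * g k j / g k i.
Definition eta i (k : 'I_(K i)) : C := mu i * sigma2 / g k i.

Lemma fr_ge0 i (k : 'I_(K i)) j : 0 <= fr k j.
Proof.
rewrite /fr; case: ifP => // _.
by apply: divr_ge0; [apply: mulr_ge0; [exact: ltW | exact: hg] | exact: ltW].
Qed.

Lemma eta_gt0 i (k : 'I_(K i)) : 0 < eta k.
Proof. by rewrite /eta divr_gt0 ?mulr_gt0. Qed.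

Lemma Fm_entry (c : choice_t K) i j : (1%:M - Gmat g mu c) i j = fr (c i) j.
Proof.
rewrite !mxE /arow /fr eq_sym; case: ifP => _ /=; first by rewrite subrr.
by rewrite sub0r opprK.
Qed.

Lemma rowexp (M : 'M[C]_N) (beta : C) (s : 'I_N -> C) i :
  \sum_j (1%:M - beta *: M) i j * s j = s i - beta * \sum_j M i j * s j.
Proof.
rewrite (eq_bigr (fun j => (i == j)%:R * s j - beta * (M i j * s j))); last first.
  by move=> j _; rewrite !mxE mulrBl mulrA.
rewrite sumrB -mulr_sumr; congr (_ - _).
rewrite (bigD1 i) //= eqxx mul1r big1 ?addr0 // => j /negPf.
by rewrite eq_sym => ->; rewrite mul0r.
Qed.

Lemma feasibleE (beta : C) (p : 'I_N -> C) :
  feasible g sigma2 (fun i => beta * mu i) p <->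
  (forall i (k : 'I_(K i)), beta * eta k <= p i - beta * \sum_j fr k j * p j).
Proof.
have e i (k : 'I_(K i)) : \sum_j arow g (fun i => beta * mu i) k j * p j
    = p i - beta * \sum_j fr k j * p j.
  transitivity (\sum_j (1%:M - beta *: \matrix_(i0, j) fr k j) i j * p j); last first.
    by rewrite rowexp; congr (_ - _ * _); apply: eq_bigr => j _; rewrite mxE.
  apply: eq_bigr => j _; rewrite !mxE /arow /fr eq_sym.
  case: ifP => _; first by rewrite mulr0 subr0.
  by rewrite sub0r !mulrA.
have e2 i (k : 'I_(K i)) : nvec g sigma2 (fun i => beta * mu i) k = beta * eta k.
  by rewrite /nvec /eta !mulrA.
split => H i k; move: (H i k); by rewrite e e2.
Qed.


Definition Fm (c : choice_t K) : 'M[C]_N := 1%:M - Gmat g mu c.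
Lemma Fm_ge0 c i j : 0 <= Fm c i j.
Proof. by rewrite /Fm Fm_entry fr_ge0. Qed.

Definition rho c := specrad (Fm c).
Definition rhos := \big[@Defs.maxr C/0]_(c : choice_t K) rho c.

Lemma betastarE : beta_star g mu = 1 / rhos.
Proof. by []. Qed.

Lemma rho_real c : rho c \is Num.real.
Proof. by rewrite /rho /specrad bmx_real // => z; exact: normr_real. Qed.

Lemma rho_ge0 c : 0 <= rho c.
Proof. by rewrite /rho /specrad bmx_ge0 // => z; exact: normr_real. Qed.

Lemma rhos_ge c : rho c <= rhos.
Proof. by apply: bmx_ge; [exact: rho_real | exact: mem_index_enum]. Qed.

Lemma rhos_real : rhos \is Num.real.
Proof. by rewrite /rhos bmx_real // => c; exact: rho_real. Qed.

Definition c0 : choice_t K := [ffun i => Ordinal (hK i)].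

Lemma specrad_pos' n (F : 'M[C]_n) : (0 < n)%N -> (forall i j, 0 <= F i j) ->
  irreducible_mx F -> 0 < specrad F.
Proof. by case: n F => [|n] F // _; apply: specrad_pos. Qed.

Lemma rhos_pos : (0 < N)%N -> (forall c, irreducible_mx (Fm c)) -> 0 < rhos.
Proof.
move=> hN hirr; apply: lt_le_trans (rhos_ge c0).
by apply: specrad_pos' => //; exact: Fm_ge0.
Qed.

Lemma root_le_rho c z : root (char_poly (Fm c)) z -> `|z| <= rho c.
Proof.
rewrite /rho /specrad => hz.
set rs := sval _.
have hp : char_poly (Fm c) = lead_coef (char_poly (Fm c)) *: \prod_(z <- rs) ('X - z%:P).
  exact: (svalP (closed_field_poly_normal (char_poly (Fm c)))).
apply: bmx_ge; first by move=> x; exact: normr_real.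
move: hz; rewrite hp /root hornerZ mulf_eq0 lead_coef_eq0.
rewrite (negPf (monic_neq0 (char_poly_monic _))) /=.
by rewrite -/(root _ z) root_prod_XsubC.
Qed.


Lemma exprZ_mx n (b : C) (F : 'M[C]_n) k : (b *: F) ^+ k = b ^+ k *: F ^+ k.
Proof.
elim: k => [|k IH]; first by rewrite !expr0 scale1r.
by rewrite !exprS IH -!mulmxE -scalemxAr -scalemxAl scalerA mulrC.
Qed.

Lemma cp_mem (F : 'M[C]_N) z :
  (z \in sval (closed_field_poly_normal (char_poly F))) = root (char_poly F) z.
Proof.
have hp := svalP (closed_field_poly_normal (char_poly F)).
rewrite [in RHS]hp /root hornerZ mulf_eq0 lead_coef_eq0.
by rewrite (negPf (monic_neq0 (char_poly_monic _))) /= -/(root _ z) root_prod_XsubC.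
Qed.

Hypothesis hN : (0 < N)%N.
Hypothesis hirr : forall c, irreducible_mx (Fm c).

Lemma dir1 beta p : 0 < beta -> (forall j, 0 <= p j) ->
  feasible g sigma2 (fun i => beta * mu i) p -> beta < beta_star g mu.
Proof.
move=> hb hp /feasibleE hf.
have hlt c i : beta * \sum_j Fm c i j * p j < p i.
  have h := hf i (c i).
  have := lt_le_trans (mulr_gt0 hb (eta_gt0 (c i))) h; rewrite subr_gt0.
  congr (_ * _ < _); apply: eq_bigr => j _; by rewrite Fm_entry.
have ppos i : 0 < p i.
  have := hlt c0 i; apply: le_lt_trans; apply: mulr_ge0; first exact: ltW.
  by apply: sumr_ge0 => j _; rewrite mulr_ge0 ?Fm_ge0.
have hr c : rho c < beta^-1.
  rewrite /rho /specrad; apply: bmx_lt_in; first by rewrite invr_gt0.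
  move=> z; rewrite cp_mem => hz.
  rewrite -[beta^-1]mulr1 ltr_pdivlMl //.
  exact: (eig_bound (@Fm_ge0 c) hb ppos (hlt c)).
have hrs : rhos < beta^-1.
  by apply: bmx_lt_in => [|c _]; [rewrite invr_gt0 | exact: hr].
rewrite betastarE ltr_pdivlMr ?rhos_pos //.
by move: hrs; rewrite -[beta^-1]mulr1 ltr_pdivlMl.
Qed.


Lemma dir2 beta : 0 < beta -> beta < beta_star g mu ->
  exists p : 'I_N -> C, (forall j, 0 <= p j) /\ feasible g sigma2 (fun i => beta * mu i) p.
Proof.
rewrite betastarE => hb hbs.
have rp := rhos_pos hN hirr.
have hbr : beta * rhos < 1 by rewrite -ltr_pdivlMr.
have hroot c z : root (char_poly (Fm c)) z -> beta * `|z| < 1.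
  move=> hz; exact: le_lt_trans (ler_wpM2l (ltW hb) (le_trans (root_le_rho hz) (rhos_ge c))) hbr.
pose Mc c := beta *: Fm c.
have Mc_ge0 c i j : 0 <= Mc c i j by rewrite mxE; apply: mulr_ge0; [exact: ltW | exact: Fm_ge0].
have Mc_irr c : irreducible_mx (Mc c).
  move=> i j; have [k [k0 hk]] := hirr c i j; exists k; split => //.
  by rewrite /Mc exprZ_mx mxE mulr_gt0 // exprn_gt0.
have bn0 : beta != 0 by rewrite gt_eqF.
have Mc_root c u : 1 <= u -> (char_poly (Mc c)).[u] != 0.
  move=> u1; rewrite (cp_eval (Mc c)).
  have -> : u%:M - Mc c = beta *: ((u / beta)%:M - Fm c).
    by rewrite scalerBr scale_scalar_mx mulrC divfK.
  rewrite detZ mulf_neq0 ?expf_neq0 // -(cp_eval (Fm c)).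
  apply/negP => hr; have := hroot c _ hr.
  rewrite normf_div (gtr0_norm hb) mulrC divfK // ger0_norm ?(le_trans ler01) //.
  by move=> /(le_lt_trans u1); rewrite ltxx.
pose A c := 1%:M - Mc c.
have detA c : \det (A c) != 0.
  by have := Mc_root c 1 (lexx 1); rewrite (cp_eval (Mc c)).
pose Inv c := (\det (A c))^-1 *: \adj (A c).
have Inv_pos c i j : 0 < Inv c i j.
  by rewrite mxE mulrC; apply: (lemN (@Mc_ge0 c) (Mc_irr c) (@Mc_root c)).
have AInv c : A c *m Inv c = 1%:M.
  by rewrite -scalemxAr mul_mx_adj scale_scalar_mx mulVf.
have InvA c : Inv c *m A c = 1%:M.
  by rewrite -scalemxAl mul_adj_mx scale_scalar_mx mulVf.
pose bv (c : choice_t K) : 'cV[C]_N := \col_i (beta * eta (c i)).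
have bv_pos (c : choice_t K) i : 0 < bv c i 0 by rewrite mxE mulr_gt0 ?eta_gt0.
pose sol (c : choice_t K) := Inv c *m bv c.
have sum_pos (f : 'I_N -> C) i : (forall j, 0 <= f j) -> 0 < f i -> 0 < \sum_j f j.
  move=> h0 hi; rewrite (bigD1 i) //=; apply: lt_le_trans hi _.
  by rewrite lerDl sumr_ge0.
have sol_pos (c : choice_t K) i : 0 < sol c i 0.
  rewrite mxE; apply: (sum_pos _ i) => [j|]; last by rewrite mulr_gt0.
  by rewrite mulr_ge0 // ltW.
have sol_eq (c : choice_t K) i : sol c i 0 - beta * \sum_j Fm c i j * sol c j 0 = beta * eta (c i).
  have h : A c *m sol c = bv c by rewrite /sol mulmxA AInv mul1mx.
  transitivity (bv c i 0); last by rewrite mxE.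
  by rewrite -h [in RHS]mxE -(rowexp (Fm c) beta (fun j => sol c j 0)).
pose tot (c : choice_t K) := \sum_i sol c i 0.
have tot_real (c : choice_t K) : tot c \is Num.real.
  by rewrite rpred_sum // => i _; apply: gtr0_real.
have [cs hcs] := fin_max c0 tot_real.
pose p j := sol cs j 0.
exists p; split; first by move=> j; exact: ltW (sol_pos cs j).
apply/feasibleE => i k.
have pr j : p j \is Num.real by apply: gtr0_real; apply: sol_pos.
have br : beta \is Num.real by apply: gtr0_real.
have hreal : p i - beta * \sum_j fr k j * p j \is Num.real.
  rewrite rpredB ?pr // rpredM // rpred_sum // => j _.
  by rewrite rpredM ?pr // ger0_real ?fr_ge0.
rewrite real_leNgt ?(gtr0_real (mulr_gt0 hb (eta_gt0 k))) //; apply/negP => hv.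
pose c' : choice_t K := [ffun l => dfwith (fun l => cs l) k l].
have hc'i : c' i = k by rewrite ffunE dfwith_in.
have hc'l l : l != i -> c' l = cs l by move=> hl; rewrite ffunE dfwith_out // eq_sym.
pose v : 'cV[C]_N := bv c' - A c' *m sol cs.
have hAs l : (A c' *m sol cs) l 0 = p l - beta * \sum_j Fm c' l j * p j.
  by rewrite mxE (rowexp (Fm c') beta p l).
have hv_eq l : v l 0 = beta * eta (c' l) - (p l - beta * \sum_j Fm c' l j * p j).
  by rewrite mxE [(- (A c' *m sol cs)) l 0]mxE hAs mxE.
have v0 l : l != i -> v l 0 = 0.
  move=> hl; rewrite hv_eq.
  have -> : \sum_j Fm c' l j * p j = \sum_j Fm cs l j * p j.
    by apply: eq_bigr => j _; rewrite !Fm_entry hc'l.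
  by rewrite hc'l // sol_eq subrr.
have vi : 0 < v i 0.
  rewrite hv_eq subr_gt0.
  have -> : \sum_j Fm c' i j * p j = \sum_j fr k j * p j.
    by apply: eq_bigr => j _; rewrite !Fm_entry hc'i.
  by rewrite hc'i.
have hsol : sol c' = sol cs + Inv c' *m v.
  by rewrite mulmxBr mulmxA InvA mul1mx addrC subrK.
have hIv l : (Inv c' *m v) l 0 = Inv c' l i * v i 0.
  rewrite mxE (bigD1 i) //= big1 ?addr0 // => j hj.
  by rewrite v0 // mulr0.
have := hcs c'; rewrite /tot hsol.
rewrite (eq_bigr (fun l => sol cs l 0 + Inv c' l i * v i 0)); last first.
  by move=> l _; rewrite mxE hIv.
rewrite big_split /= -{2}[\sum_i0 sol cs i0 0]addr0 lerD2l.
have : 0 < \sum_l Inv c' l i * v i 0.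
  apply: (sum_pos _ i) => [l|]; last by rewrite mulr_gt0.
  by rewrite mulr_ge0 // ltW.
by move=> h1 h2; have := lt_le_trans h1 h2; rewrite ltxx.
Qed.


Lemma main_sec :
  (forall beta : C, 0 < beta ->
     ((exists p : 'I_N -> C, (forall j, 0 <= p j) /\
          feasible g sigma2 (fun i => beta * mu i) p)
      <-> beta < beta_star g mu))
  /\
  is_sup (fun beta : C => 0 < beta /\
            exists p : 'I_N -> C, (forall j, 0 <= p j) /\
              feasible g sigma2 (fun i => beta * mu i) p)
         (beta_star g mu).
Proof.
have part1 : forall beta : C, 0 < beta ->
     ((exists p : 'I_N -> C, (forall j, 0 <= p j) /\
          feasible g sigma2 (fun i => beta * mu i) p)
      <-> beta < beta_star g mu).
  move=> beta hb; split; last exact: dir2.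
  by case=> p [hp hf]; apply: (dir1 hb hp hf).
split => //; split.
  by move=> b [hb hex]; apply: ltW; apply/(part1 b hb).
move=> u hu.
have bpos : 0 < beta_star g mu by rewrite betastarE divr_gt0 ?rhos_pos.
have [h1 h2] := midf_lt bpos.
have hm : 0 < (0 + beta_star g mu) / 2 by [].
have hu0 : (0 + beta_star g mu) / 2 <= u.
  by apply: hu; split => //; apply/(part1 _ hm).
have upos : 0 < u := lt_le_trans h1 hu0.
rewrite real_leNgt ?gtr0_real //; apply/negP => hub.
have [h3 h4] := midf_lt hub.
have hm2 : 0 < (u + beta_star g mu) / 2 := lt_trans upos h3.
have := hu ((u + beta_star g mu) / 2) (conj hm2 (proj2 (part1 _ hm2) h4)).
by move/(lt_le_trans h3); rewrite ltxx.
Qed.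

End Main.

Theorem mainTheorem6 (C : numClosedFieldType) (N : nat) (K : 'I_N -> nat)
  (g : forall i : 'I_N, 'I_(K i) -> 'I_N -> C) (sigma2 : C) (mu : 'I_N -> C) :
  (0 < N)%N ->
  (forall i, 0 < K i)%N ->
  (forall i (k : 'I_(K i)) j, 0 <= g i k j) ->
  (forall i (k : 'I_(K i)), 0 < g i k i) ->
  0 < sigma2 ->
  (forall i, 0 < mu i) ->
  (forall c : choice_t K, irreducible_mx (1%:M - Gmat g mu c)) ->
  (forall beta : C, 0 < beta ->
     ((exists p : 'I_N -> C, (forall j, 0 <= p j) /\
          feasible g sigma2 (fun i => beta * mu i) p)
      <-> beta < beta_star g mu))
  /\
  is_sup (fun beta : C => 0 < beta /\
            exists p : 'I_N -> C, (forall j, 0 <= p j) /\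
              feasible g sigma2 (fun i => beta * mu i) p)
         (beta_star g mu).
Proof.
move=> hN hK hg hgi hs hmu hirr.
exact: (@main_sec C N K g sigma2 mu hK hg hgi hs hmu hN hirr).
Qed.
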